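(* Let $k,r\geq 1$, let $1\leq m\leq k$, let $1\le d\le r$, and let $I_d\subseteq\{1,\dots,r\}$ with $|I_d|=d$. Then for every $n\geq k$, $$\bigl|S_n^{(r)}\bigl(T_{k,r}^m(I_d)\bigr)\bigr|=(k-1)!\,r^{k-1}\prod_{j=k}^n\bigl((r-d)j+(k-1)d\bigr).$$
   Context: For $n,r\ge1$, $S_n^{(r)}$ denotes the set of coloured permutations of length $n$ with $r$ colours: sequences $\phi=(\phi_1,\dots,\phi_n)$ where $\phi_i=a_i^{(c_i)}$, $(a_1,\dots,a_n)$ is a permutation of $\{1,\dots,n\}$ and each $c_i\in\{1,\dots,r\}$ is the colour of $a_i$; so $|S_n^{(r)}|=n!\,r^n$. Write $|\phi|=(a_1,\dots,a_n)$. For $\phi=(\tau_1^{(s_1)},\dots,\tau_k^{(s_k)})\in S_k^{(r)}$ and $\psi=(\alpha_1^{(v_1)},\dots,\alpha_n^{(v_n)})\in S_n^{(r)}$, an occurrence of $\phi$ in $\psi$ is a sequence of indices $1\le i_1<\dots<i_k\le n$ such that $(\alpha_{i_1},\dots,\alpha_{i_k})$ is order-isomorphic to $(\tau_1,\dots,\tau_k)$ and $v_{i_j}=s_j$ for all $j=1,\dots,k$. $\psi$ contains $\phi$ if there is at least one occurrence, and avoids $\phi$ otherwise. For a set $T$ of coloured patterns, $S_n^{(r)}(T)$ is the set of $\psi\in S_n^{(r)}$ avoiding every $\phi\in T$. For $I_d\subseteq\{1,\dots,r\}$ with $|I_d|=d$ and $1\le m\le k$, $T_{k,r}^m(I_d)$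 is the set of all $\phi\in S_k^{(r)}$ whose first entry is $\phi_1=m^{(c)}$ for some colour $c\in I_d$. *)

(* Defs.v *)
From mathcomp Require Import all_boot all_order all_fingroup.
Set Implicit Arguments. Unset Strict Implicit. Unset Printing Implicit Defensive.

(* A coloured permutation of length n with r colours: positions are 'I_n,
   the underlying permutation (a_1..a_n) is given by p : 'S_n (a_{i+1} = p i,
   0-based values), and the colour of position i is c i : 'I_r
   (colours 0..r-1 stand for 1..r). *)
Definition cperm (n r : nat) : finType := ('S_n * {ffun 'I_n -> 'I_r})%type.

Definition occurrence (k n r : nat) (phi : cperm k r) (psi : cperm n r)
  (f : {ffun 'I_k -> 'I_n}) : bool :=
  [forall j1 : 'I_k, forall j2 : 'I_k, (j1 < j2)%N ==> (f j1 < f j2)%N] &&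
  [forall j1 : 'I_k, forall j2 : 'I_k,
     ((psi.1 (f j1) : nat) < psi.1 (f j2))%N == ((phi.1 j1 : nat) < phi.1 j2)%N] &&
  [forall j : 'I_k, psi.2 (f j) == phi.2 j].

Definition contains (k n r : nat) (psi : cperm n r) (phi : cperm k r) : bool :=
  [exists f : {ffun 'I_k -> 'I_n}, occurrence phi psi f].

Definition avoiders (k n r : nat) (T : {set cperm k r}) : {set cperm n r} :=
  [set psi : cperm n r | [forall phi in T, ~~ contains psi phi]].

(* T_{k,r}^m(I): patterns whose first entry is m^{(c)} with c in I
   (value m, 1-based, is m.-1 0-based; first position is index 0). *)
Definition Tpat (k r m : nat) (I : {set 'I_r}) : {set cperm k r} :=
  [set phi : cperm k r | [exists i : 'I_k,
     [&& val i == 0, val (phi.1 i) == m.-1 & phi.2 i \in I]]].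

(* Main.v *)
Require Import Defs.
From mathcomp Require Import all_boot all_order all_fingroup.
From mathcomp Require Import zify.
Set Implicit Arguments. Unset Strict Implicit. Unset Printing Implicit Defensive.

Lemma count_iota_int (a b n : nat) :
  count (fun v => (a <= v) && (v < b))%N (iota 0 n) = (minn b n - a)%N.
Proof.
elim: n => [|n IH]; first by rewrite /= minn0.
rewrite -addn1 iotaD count_cat IH /= add0n addn0.
case: (leqP a n) => Ha; case: (ltnP n b) => Hb /=; lia.
Qed.

Lemma card_ord_pred (n : nat) (Q : pred nat) :
  #|[set v : 'I_n | Q v]| = count Q (iota 0 n).
Proof.
rewrite -val_enum_ord count_map cardE.
rewrite /enum_mem size_filter.
rewrite count_filter; apply: eq_count => x; by rewrite !inE /= andbT.
Qed.

Lemma card_perm_pred (n : nat) (p : 'S_n) (Q : pred nat) :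
  #|[set y | Q (p y)]| = count Q (iota 0 n).
Proof.
have -> : [set y | Q (p y)] = p @^-1: [set v : 'I_n | Q v].
  by apply/setP => y; rewrite !inE.
rewrite card_preimset; first exact: card_ord_pred.
exact: perm_inj.
Qed.

Lemma card_perm_lt (n : nat) (p : 'S_n) x :
  #|[set y | (p y < p x)%N]| = p x.
Proof.
rewrite (@card_perm_pred n p (fun v => (0 <= v) && (v < p x))%N).
rewrite count_iota_int. have := ltn_ord (p x). lia.
Qed.

Lemma card_perm_gt (n : nat) (p : 'S_n) x :
  #|[set y | (p x < p y)%N]| = (n - (p x).+1)%N.
Proof.
have -> : [set y | (p x < p y)%N] = [set y | (fun v => ((p x).+1 <= v) && (v < n))%N (p y)].
  by apply/setP => y; rewrite !inE ltn_ord andbT.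
rewrite (@card_perm_pred n p (fun v => ((p x).+1 <= v) && (v < n))%N).
rewrite count_iota_int. lia.
Qed.
Definition sm n (p : 'S_n) (i : 'I_n) :=
  #|[set j : 'I_n | (i < j)%N && (p j < p i)%N]|.
Definition lg n (p : 'S_n) (i : 'I_n) :=
  #|[set j : 'I_n | (i < j)%N && (p i < p j)%N]|.

Lemma perm_val_inj n (p : 'S_n) (x y : 'I_n) : (p x : nat) = p y -> x = y.
Proof. by move/val_inj/perm_inj. Qed.

Lemma key_rank n (p : 'S_n) (i j : 'I_n) : (i < j)%N ->
  (p j < p i)%N = (#|[set l : 'I_n | (i < l)%N && (p l < p j)%N]| < sm p i)%N.
Proof.
move=> Hij; rewrite /sm.
case: (ltnP (p j) (p i)) => H.
  apply/esym; apply: proper_card; apply/properP; split.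
    apply/subsetP => l; rewrite !inE => /andP[-> Hl] /=; exact: ltn_trans Hl H.
  by exists j; rewrite !inE ?Hij ?H ?ltnn.
apply/esym/negbTE; rewrite -leqNgt; apply: subset_leq_card.
apply/subsetP => l; rewrite !inE => /andP[-> Hl] /=; exact: leq_trans Hl H.
Qed.

Lemma lehmer_inj n (p q : 'S_n) : (forall i, sm p i = sm q i) -> p = q.
Proof.
move=> Hs.
have H : forall t (j l : 'I_n), (n - t <= j)%N -> (n - t <= l)%N ->
    (p j < p l)%N = (q j < q l)%N.
  elim=> [|t IH] j l.
    rewrite subn0 => Hj; have := ltn_ord j; lia.
  have side : forall a b : 'I_n, (n - t <= b)%N -> (a:nat) = (n - t.+1)%N ->
      (n - t <= a)%N = false ->
      (p b < p a)%N = (q b < q a)%N.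
    move=> a b Hb Ha Hna.
    have Hab : (a < b)%N by lia.
    rewrite (key_rank p Hab) (key_rank q Hab) Hs.
    congr (_ < _)%N; apply: eq_card => x; rewrite !inE.
    case Hax: (a < x)%N => //=; apply: IH => //. lia.
  have dist : forall (pp : 'S_n) (a b : 'I_n), a != b ->
      (pp a < pp b)%N = ~~ (pp b < pp a)%N.
    move=> pp a b Hab; have : (pp a : nat) != pp b.
      by apply/eqP => /perm_val_inj E; rewrite E eqxx in Hab.
    case: ltngtP => //.
  move=> Hj Hl.
  case Hj': (n - t <= j)%N; case Hl': (n - t <= l)%N.
  - exact: IH.
  - have Hlv : (l:nat) = (n - t.+1)%N by lia.
    exact: side.
  - have Hjv : (j:nat) = (n - t.+1)%N by lia.
    have Hjl : j != l by apply/eqP => E; rewrite E Hl' in Hj'.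
    by rewrite (dist p) // (dist q) // side.
  - have Ejl : (j:nat) = l by lia.
    have -> : j = l by apply: val_inj.
    by rewrite !ltnn.
have Hall : forall j l : 'I_n, (p j < p l)%N = (q j < q l)%N.
  by move=> j l; apply: (H n); rewrite subnn.
apply/permP => x; apply: val_inj.
suff : (p x : nat) = q x by [].
by rewrite -(card_perm_lt p x) -(card_perm_lt q x); apply: eq_card => y; rewrite !inE Hall.
Qed.

Lemma sm_lg n (p : 'S_n) (i : 'I_n) : (sm p i + lg p i = n.-1 - i)%N.
Proof.
rewrite /sm /lg -cardsUI.
have -> : [set j : 'I_n | (i < j)%N && (p j < p i)%N] :&: [set j : 'I_n | (i < j)%N && (p i < p j)%N] = set0.
  apply/setP => j; rewrite !inE; case: (i < j : bool)%N => //=.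
  by case: ltngtP.
rewrite cards0 addn0.
have -> : [set j : 'I_n | (i < j)%N && (p j < p i)%N] :|: [set j : 'I_n | (i < j)%N && (p i < p j)%N]
   = [set j : 'I_n | (fun v => (i.+1 <= v) && (v < n))%N j].
  apply/setP => j; rewrite !inE ltn_ord andbT.
  case Hij: (i < j)%N => //=.
  case: ltngtP => // /perm_val_inj E; by rewrite E ltnn in Hij.
have E := @card_ord_pred n (fun v => ((i.+1 <= v) && (v < n))%N).
rewrite count_iota_int in E.
etransitivity; first exact: E.
lia.
Qed.

Definition badpos (k m r n : nat) (I : {set 'I_r}) (psi : cperm n r) (i : 'I_n) : bool :=
  [&& psi.2 i \in I, (m.-1 <= sm psi.1 i)%N & (k - m <= lg psi.1 i)%N].

Lemma contains_bad (k m r n : nat) (I : {set 'I_r}) (psi : cperm n r) (phi : cperm k r) :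
  (1 <= m <= k)%N -> phi \in Tpat k m I -> contains psi phi ->
  exists i, badpos k m I psi i.
Proof.
move=> Hm; rewrite inE => /existsP[i0 /and3P[Hi0 Hv Hc]].
case/existsP=> f /andP[/andP[Hmono Hord] Hcol].
have mono : forall a b : 'I_k, (a < b)%N -> (f a < f b)%N.
  by move=> a b H; exact: (implyP (forallP (forallP Hmono a) b) H).
have ordf : forall a b, (psi.1 (f a) < psi.1 (f b))%N = (phi.1 a < phi.1 b)%N.
  by move=> a b; exact: (eqP (forallP (forallP Hord a) b)).
have finj : injective f.
  move=> a b E; case: (ltngtP a b) => H.
  - by have := mono _ _ H; rewrite E ltnn.
  - by have := mono _ _ H; rewrite E ltnn.
  - exact: val_inj.
have gt0 : forall y : 'I_k, y != i0 -> (i0 < y)%N.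
  move=> y Hy; rewrite (eqP Hi0) lt0n; apply/eqP => Ey.
  have Eyi : y = i0 by apply: val_inj; rewrite /= Ey (eqP Hi0).
  by rewrite Eyi eqxx in Hy.
exists (f i0); rewrite /badpos; apply/and3P; split.
- by rewrite (eqP (forallP Hcol i0)).
- have -> : m.-1 = phi.1 i0 by rewrite (eqP Hv).
  rewrite -(card_perm_lt phi.1 i0) -(card_imset _ finj).
  apply: subset_leq_card; apply/subsetP => x /imsetP[y Hy ->]; rewrite inE in Hy.
  rewrite inE ordf Hy andbT; apply: mono; apply: gt0.
  by apply: contraTneq Hy => ->; rewrite ltnn.
- have -> : (k - m = k - (phi.1 i0).+1)%N by rewrite (eqP Hv); lia.
  rewrite -(card_perm_gt phi.1 i0) -(card_imset _ finj).
  apply: subset_leq_card; apply/subsetP => x /imsetP[y Hy ->]; rewrite inE in Hy.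
  rewrite inE ordf Hy andbT; apply: mono; apply: gt0.
  by apply: contraTneq Hy => ->; rewrite ltnn.
Qed.

Lemma enum_sorted n (S : {set 'I_n}) : sorted (fun x y : 'I_n => (x < y)%N) (enum S).
Proof.
rewrite /enum_mem. apply: sorted_filter. move=> y x z; exact: ltn_trans.
have := iota_ltn_sorted 0 n. rewrite -val_enum_ord sorted_map.
by rewrite enumT.
Qed.

Lemma take_set (T : finType) (S : {set T}) t : (t <= #|S|)%N ->
  exists2 A : {set T}, A \subset S & #|A| = t.
Proof.
move=> Ht; exists [set x in take t (enum S)].
  by apply/subsetP => x; rewrite inE => /mem_take; rewrite mem_enum.
have U : uniq (take t (enum S)) by apply: take_uniq; exact: enum_uniq.
by rewrite cardsE (card_uniqP U) size_takel // -cardE.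
Qed.

Lemma bad_contains (k m r n : nat) (I : {set 'I_r}) (psi : cperm n r) (i : 'I_n) :
  (1 <= m <= k)%N -> badpos k m I psi i ->
  exists2 phi : cperm k r, phi \in Tpat k m I & contains psi phi.
Proof.
move=> Hm /and3P[Hc Hs Hl].
set p := psi.1.
have [A subA cardA] := take_set Hs.
have [B subB cardB] := take_set Hl.
set S := i |: (A :|: B).
have inA : forall x, x \in A -> (i < x)%N && (p x < p i)%N.
  by move=> x /(subsetP subA); rewrite inE.
have inB : forall x, x \in B -> (i < x)%N && (p i < p x)%N.
  by move=> x /(subsetP subB); rewrite inE.
have AB0 : A :&: B = set0.
  apply/setP => x; rewrite !inE; apply/negbTE; apply/andP => [[/inA/andP[_ H1] /inB/andP[_ H2]]].
  by have := ltn_trans H1 H2; rewrite ltnn.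
have cardS : #|S| = k.
  rewrite /S cardsU1 cardsU AB0 cards0 cardA cardB.
  have -> : i \notin A :|: B.
    by rewrite !inE; apply/negP => /orP[/inA|/inB]; rewrite ltnn.
  simpl; lia.
have geS : forall x, x \in S -> (i <= x)%N.
  move=> x; rewrite !inE => /orP[/eqP ->//|/orP[/inA|/inB] /andP[H _]]; exact: ltnW.
set es := enum S.
have sizes : size es = k by rewrite /es -cardE.
have k0 : (0 < k)%N by lia.
set f := fun j : 'I_k => nth i es j.
have fmono : forall a b : 'I_k, (a < b)%N -> (f a < f b)%N.
  move=> a b H; apply: (sorted_ltn_nth _ _ (enum_sorted S)) => //.
  - by move=> y x z; exact: ltn_trans.
  - by rewrite inE -/es sizes ltn_ord.
  - by rewrite inE -/es sizes ltn_ord.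
have finj : injective f.
  move=> a b E; case: (ltngtP a b) => H.
  - by have := fmono _ _ H; rewrite E ltnn.
  - by have := fmono _ _ H; rewrite E ltnn.
  - exact: val_inj.
have fS : forall j, f j \in S.
  by move=> j; rewrite -mem_enum; apply: mem_nth; rewrite sizes ltn_ord.
have fsurj : forall x, x \in S -> exists j, f j = x.
  move=> x Hx.
  have Hix : (index x es < k)%N by rewrite -sizes index_mem mem_enum.
  by exists (Ordinal Hix); rewrite /f /= nth_index // mem_enum.
set i0 : 'I_k := Ordinal k0.
have f0 : f i0 = i.
  have [j Hj] := fsurj i (setU11 _ _).
  case: (posnP j) => Hj0.
    by rewrite -Hj; congr f; apply: val_inj.
  have := fmono i0 j Hj0; rewrite Hj => H.
  by have := geS _ (fS i0); rewrite leqNgt H.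
have cardf : forall P : pred 'I_n,
    #|[set j : 'I_k | P (f j)]| = #|[set x in S | P x]|.
  move=> P; rewrite -(card_imset _ finj); congr #|pred_of_set _|.
  apply/setP => x; apply/imsetP/idP.
    by case=> j; rewrite inE => Hj ->; rewrite inE fS.
  rewrite inE => /andP[Hx HP]; have [j Hj] := fsurj x Hx.
  by exists j => //; rewrite inE Hj.
set v := fun j : 'I_k => (p (f j) : nat).
have vinj : forall a b, v a = v b -> a = b.
  by move=> a b /perm_val_inj /finj.
set rk := fun j : 'I_k => #|[set j' : 'I_k | (v j' < v j)%N]|.
have rk_mono : forall a b, (v a < v b)%N -> (rk a < rk b)%N.
  move=> a b H; apply: proper_card; apply/properP; split.
    apply/subsetP => l; rewrite !inE => Hl0; exact: ltn_trans Hl0 H.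
  by exists a; rewrite !inE ?H ?ltnn.
have rk_eq : forall a b, (rk a < rk b)%N = (v a < v b)%N.
  move=> a b; case: (ltngtP (v a) (v b)) => H.
  - exact: rk_mono.
  - by apply/negbTE; rewrite -leqNgt ltnW // rk_mono.
  - by rewrite (vinj _ _ H) ltnn.
have rk_lt : forall j, (rk j < k)%N.
  move=> j; apply: (@leq_ltn_trans #|[set~ j]|).
    apply: subset_leq_card; apply/subsetP => l; rewrite !inE.
    by apply: contraTneq => ->; rewrite ltnn.
  by rewrite cardsC1 card_ord; lia.
set g := fun j => Ordinal (rk_lt j).
have ginj : injective g.
  move=> a b /(congr1 val) /= E; apply: vinj.
  case: (ltngtP (v a) (v b)) => // /rk_mono; by rewrite E ltnn.
exists (perm ginj, [ffun j => psi.2 (f j)]).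
  rewrite inE; apply/existsP; exists i0; apply/and3P; split => //=.
  - rewrite permE /= /rk /v f0 (cardf (fun x => (p x < p i)%N)).
    rewrite -cardA; apply/eqP; congr #|pred_of_set _|; apply/setP => x; rewrite !inE.
    apply/idP/idP.
      case/andP => Hx H; move: Hx.
      case/or3P => [/eqP Ex|//|/inB/andP[_ H2]].
        by rewrite Ex ltnn in H.
      by have := ltn_trans H H2; rewrite ltnn.
    by move=> HA; rewrite HA orbT /=; case/andP: (inA _ HA).
  - by rewrite ffunE f0.
apply/existsP; exists [ffun j => f j]; apply/andP; split; first (apply/andP; split).
- apply/forallP => a; apply/forallP => b; apply/implyP => H.
  by rewrite !ffunE; apply: fmono.
- apply/forallP => a; apply/forallP => b.
  by rewrite !ffunE /= !permE /= rk_eq.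
- by apply/forallP => j; rewrite !ffunE.
Qed.

Lemma avoid_iff (k m r n : nat) (I : {set 'I_r}) (psi : cperm n r) :
  (1 <= m <= k)%N ->
  (psi \in avoiders n (Tpat k m I)) = [forall i, ~~ badpos k m I psi i].
Proof.
move=> Hm; rewrite inE; apply/forallP/forallP.
- move=> H i; apply/negP => Hb; have [phi HT Hc] := bad_contains Hm Hb.
  by have := H phi; rewrite HT Hc.
- move=> H phi; apply/implyP => HT; apply/negP => Hc.
  have [i Hb] := contains_bad Hm HT Hc.
  by have := H i; rewrite Hb.
Qed.

Lemma card_fam n (T : finType) (D : 'I_n -> {set T}) :
  #|[set h : {ffun 'I_n -> T} | [forall i, h i \in D i]]| = (\prod_(i < n) #|D i|)%N.
Proof.
have -> : #|[set h : {ffun 'I_n -> T} | [forall i, h i \in D i]]| =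
          #|(family (fun i => mem (D i)) : simpl_pred {ffun 'I_n -> T})|.
  apply: eq_card => h; rewrite inE; apply/forallP/familyP => H i; exact: H.
by rewrite card_family foldrE big_map big_enum.
Qed.

Lemma reindex (F : nat -> nat) n :
  (\prod_(i < n) F (n - i) = \prod_(1 <= j < n.+1) F j)%N.
Proof.
elim: n => [|n IH]; first by rewrite big_ord0 big_geq.
rewrite big_ord_recl big_nat_recr //= subn0.
rewrite (eq_bigr (fun i : 'I_n => F (n - i)%N)); last by move=> i _; rewrite /bump /= subSS.
by rewrite IH mulnC.
Qed.

Lemma final_prod k r d n : (1 <= k)%N -> (k <= n)%N -> (d <= r)%N ->
  (\prod_(1 <= j < n.+1) (r * j - d * (j - k.-1)) =
   (k.-1)`! * r ^ k.-1 * \prod_(k <= j < n.+1) ((r - d) * j + k.-1 * d))%N.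
Proof.
move=> Hk Hkn Hd.
rewrite (@big_cat_nat _ _ _ k) //; last by lia.
congr (_ * _)%N.
  rewrite (@eq_big_nat _ _ _ 1 k _ (fun j => r * j)%N); last first.
    move=> j /andP[_ Hj]; have -> : (j - k.-1 = 0)%N by lia.
    by rewrite muln0 subn0.
  rewrite big_split /= prod_nat_const_nat fact_prod prednK // mulnC.
  by congr (_ * _)%N; congr (_ ^ _)%N; lia.
apply: eq_big_nat => j /andP[Hj _].
have [a ->] : exists a, j = (a + k.-1)%N by exists (j - k.-1)%N; lia.
rewrite addnK mulnBl !mulnDr [(k.-1 * d)%N]mulnC.
have H1 : (d * a <= r * a)%N by apply: leq_mul.
have H2 : (d * k.-1 <= r * k.-1)%N by apply: leq_mul.
move: H1 H2; move: (r * a)%N (r * k.-1)%N (d * a)%N (d * k.-1)%N => x1 x2 x3 x4.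
lia.
Qed.

Unset Implicit Arguments.
Unset Strict Implicit.

Theorem theorem1 (k r m d : nat) (I : {set 'I_r}) (n : nat) :
  (1 <= k)%N -> (1 <= r)%N -> (1 <= m <= k)%N -> (1 <= d <= r)%N ->
  #|I| = d -> (k <= n)%N ->
  #|avoiders n (Tpat k m I)| =
    ((k.-1)`! * r ^ k.-1 * \prod_(k <= j < n.+1) ((r - d) * j + k.-1 * d))%N.
Proof.
move=> Hk Hr Hm /andP[Hd1 Hdr] HI Hkn.
set S1 := fun i : 'I_n => [set s : 'I_n.+1 | (s <= n.-1 - i)%N].
set S2 := fun i : 'I_n => [set s : 'I_n.+1 | (m.-1 <= s) && (s + (k - m) <= n.-1 - i)]%N.
set Dg := fun i => setX [set: 'I_r] (S1 i) :\: setX I (S2 i).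
set Df := fun i => setX [set: 'I_r] (S1 i).
have smle : forall (p : 'S_n) i, (sm p i <= n.-1 - i)%N by move=> p i; have := sm_lg p i; lia.
set Phi := fun psi : cperm n r => [ffun i => (psi.2 i, inord (sm psi.1 i) : 'I_n.+1)].
have Phi2 : forall psi i, ((Phi psi i).2 : nat) = sm psi.1 i.
  move=> psi i; by rewrite ffunE /= inordK // ltnS (leq_trans (smle _ i)) // (leq_trans (leq_subr _ _)) // leq_pred.
have Phi1 : forall psi i, (Phi psi i).1 = psi.2 i by move=> psi i; rewrite ffunE.
have Phiinj : injective Phi.
  move=> [p1 c1] [p2 c2] E.
  have Ec : c1 = c2.
    apply/ffunP => i; have Ei : Phi (p1, c1) i = Phi (p2, c2) i by rewrite E.
    have := congr1 fst Ei; by rewrite !Phi1.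
  have Ep : p1 = p2.
    apply: lehmer_inj => i; have Ei : Phi (p1, c1) i = Phi (p2, c2) i by rewrite E.
    have := congr1 (fun x : 'I_r * 'I_n.+1 => (x.2 : nat)) Ei; by rewrite /= !Phi2.
  by rewrite Ec Ep.
have cardS1 : forall i, #|S1 i| = (n - i)%N.
  move=> i; have E := @card_ord_pred n.+1 (fun v => ((0 <= v) && (v < (n.-1 - i).+1))%N).
  rewrite count_iota_int in E.
  have -> : S1 i = [set v : 'I_n.+1 | (fun v => ((0 <= v) && (v < (n.-1 - i).+1))%N) v].
    by apply/setP => v; rewrite !inE ltnS.
  etransitivity; first exact: E.
  have := ltn_ord i; lia.
have cardS2 : forall i, #|S2 i| = ((n - i) - k.-1)%N.
  move=> i; have E := @card_ord_pred n.+1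
    (fun v => ((m.-1 <= v) && (v < (n.-1 - i).+1 - (k - m)))%N).
  rewrite count_iota_int in E.
  have -> : S2 i = [set v : 'I_n.+1 |
      (fun v => ((m.-1 <= v) && (v < (n.-1 - i).+1 - (k - m)))%N) v].
    apply/setP => v; rewrite !inE /=; case: (m.-1 <= v)%N => //=.
    apply/idP/idP => H; lia.
  etransitivity; first exact: E.
  have := ltn_ord i; lia.
have cardDg : forall i, #|Dg i| = (r * (n - i) - d * ((n - i) - k.-1))%N.
  move=> i; rewrite /Dg cardsD.
  have -> : setX [set: 'I_r] (S1 i) :&: setX I (S2 i) = setX I (S2 i).
    apply/setIidPr; apply/subsetP => [[c s]]; rewrite !inE /= => /andP[_ /andP[_ H]].
    exact: leq_trans (leq_addr _ _) H.
  by rewrite !cardsX cardsT card_ord cardS1 cardS2 HI.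
have cardDf : forall i, #|Df i| = (r * (n - i))%N.
  by move=> i; rewrite /Df cardsX cardsT card_ord cardS1.
set Full := [set h : {ffun 'I_n -> 'I_r * 'I_n.+1} | [forall i, h i \in Df i]].
set G := [set h : {ffun 'I_n -> 'I_r * 'I_n.+1} | [forall i, h i \in Dg i]].
have cardFull : #|Full| = (n`! * r ^ n)%N.
  rewrite card_fam (eq_bigr (fun i : 'I_n => r * (n - i))%N); last by move=> i _; exact: cardDf.
  etransitivity; first exact: (reindex (fun j => r * j)%N n).
  rewrite big_split /= prod_nat_const_nat -fact_prod subn1 /= mulnC //.
have cardcp : #|cperm n r| = (n`! * r ^ n)%N.
  by rewrite /cperm card_prod card_Sn card_ffun !card_ord.
have imPhi : Phi @: setT = Full.
  apply/eqP; rewrite eqEcard; apply/andP; split.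
    apply/subsetP => h /imsetP[psi _ ->]; rewrite inE; apply/forallP => i.
    case Ep: (Phi psi i) => [c s]; have := Phi2 psi i; rewrite Ep /= => Es.
    by rewrite !inE /= Es smle.
  by rewrite card_imset // cardsT cardFull cardcp.
have GsubFull : G \subset Full.
  apply/subsetP => h; rewrite !inE => /forallP H; apply/forallP => i.
  by have := H i; rewrite /Dg inE => /andP[_].
have rel : forall psi i, (Phi psi i \in Dg i) = ~~ badpos k m I psi i.
  move=> psi i; rewrite /Dg /badpos.
  case Ep: (Phi psi i) => [c s]; have := Phi2 psi i; have := Phi1 psi i.
  rewrite Ep /= => H1 H2.
  rewrite H1 !inE /= H2.
  have H := sm_lg psi.1 i.
  rewrite (smle psi.1 i) andbT; congr (~~ _); case: (psi.2 i \in I) => //=.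
  congr (_ && _); move: H; move: (sm psi.1 i) (lg psi.1 i) => a b H.
  set L := (n.-1 - i)%N in H *.
  by apply/idP/idP => H'; lia.
transitivity #|Phi @^-1: G|.
  apply: eq_card => psi; rewrite avoid_iff // !inE; apply: eq_forallb => i.
  by rewrite rel.
rewrite -(card_imset _ Phiinj).
have -> : Phi @: (Phi @^-1: G) = G.
  apply/setP => h; apply/imsetP/idP.
    by case=> psi; rewrite inE => Hpsi ->.
  move=> Hh; have : h \in Phi @: setT by rewrite imPhi (subsetP GsubFull).
  by case/imsetP => psi _ E; exists psi => //; rewrite inE -E.
rewrite card_fam (eq_bigr (fun i : 'I_n => (r * (n - i) - d * ((n - i) - k.-1)))%N);
  last by move=> i _; exact: cardDg.
etransitivity; first exact: (reindex (fun j => r * j - d * (j - k.-1))%N n).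
exact: final_prod.
Qed.
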